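(* Let $H$ be a hexagonal system with a perfect matching, and let $H_1,H_2,\ldots,H_k$ ($k\ge 1$) be its normal components. Then $$cf(H)=\sum_{i=1}^{k} cf(H_i).$$
   Context: A hexagonal system (HS) is a finite 2-connected plane graph in which every interior face is a regular hexagon (a hexagon of the hexagonal lattice); its interior faces are called hexagons. For a graph $G$ with a perfect matching and a perfect matching $M$ of $G$, a forcing set of $M$ is a subset of $M$ contained in no other perfect matching of $G$. A complete forcing set of $G$ is a set $S\subseteq E(G)$ such that for every perfect matching $M$ of $G$, $S\cap M$ is a forcing set of $M$. The complete forcing number $cf(G)$ is the minimum cardinality of a complete forcing set of $G$. An edge of an HS $H$ with a perfect matching is a fixed double edge if it lies in every perfect matching of $H$, and a fixed single edge if it lies in no perfect matching of $H$; these are the fixed edges. $H$ is normal if it has no fixed edge. The non-fixed edges of $H$ span a subgraph each of whose components is a normal HS; these components are the normal components of $H$ (if $H$ is normal, its only normal component is $H$ itself). *)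

(* Defs.v *)
From mathcomp Require Import all_boot all_order all_algebra.
From mathcomp Require Import finmap.
Set Implicit Arguments. Unset Strict Implicit. Unset Printing Implicit Defensive.
Import GRing.Theory Num.Theory.
Local Open Scope fset_scope.

(* Vertices are the points of Z^2.  The edges are all horizontal unit
   segments (x,y)-(x+1,y) and the vertical unit segments (x,y)-(x,y+1)
   with x+y even.  This plane graph is (a plane drawing of) the hexagonal
   lattice; its bounded faces are the "bricks" (hexagons). *)
Definition vertex := (int * int)%type.

(* An edge is named by its lower/left endpoint and a flag:
   (p, true) = horizontal edge p -- p+(1,0);
   (p, false) = vertical edge p -- p+(0,1)  (only used when x+y is even). *)
Definition edge := (vertex * bool)%type.

Definition ends (e : edge) : seq vertex :=
  let: ((x, y), h) := e in
  if h then [:: (x, y); (x + 1, y)%R] else [:: (x, y); (x, y + 1)%R].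

(* A cell (hexagon of the lattice) is named by its lower-left corner (x,y),
   with x+y even.  Its six vertices are (x..x+2, y) and (x..x+2, y+1). *)
Definition cell := (int * int)%type.

Definition valid_cell (c : cell) : bool := let: (x, y) := c in (2 %| (x + y)%R)%Z.

Definition cell_edges (c : cell) : {fset edge} :=
  let: (x, y) := c in
  [fset ((x, y), true); ((x + 1, y)%R, true);
        ((x, y + 1)%R, true); ((x + 1, y + 1)%R, true);
        ((x, y), false); ((x + 2, y)%R, false)].

Definition cell_adj (c d : cell) : bool :=
  (c != d) && (cell_edges c `&` cell_edges d != fset0).

(* A hexagonal system is determined by its (finite, nonempty) set S of
   hexagons: S is connected through shared edges (this makes the graph
   2-connected) and has no holes, i.e. every lattice cell outside S can
   be joined to infinity through cells outside S (so every interior face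
   of the resulting plane graph is a lattice hexagon). *)
Definition is_HS (S : {fset cell}) : Prop :=
  [/\ S != fset0,
      (forall c, c \in S -> valid_cell c),
      (forall c d, c \in S -> d \in S ->
         exists p : seq cell, [/\ path cell_adj c p, all (mem S) p & last c p = d])
    & (forall c, valid_cell c -> c \notin S -> forall N : nat,
         exists p : seq cell,
           [/\ path cell_adj c p, all valid_cell p, all (fun d => d \notin S) p
             & (N%:Z < `|fst (last c p)|)%R])].

Definition HS_edges (S : {fset cell}) : {fset edge} :=
  \bigcup_(c <- S) cell_edges c.

(* A graph (without isolated vertices) is given by its finite edge set E. *)

Definition is_pm (E M : {fset edge}) : bool :=
  (M `<=` E) &&
  all (fun e => all (fun v => #|` [fset f in M | v \in ends f]| == 1) (ends e))
      (enum_fset E).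

Definition has_pm (E : {fset edge}) : Prop := exists M, is_pm E M.

(* F is a forcing set of the perfect matching M: F is a subset of M
   contained in no other perfect matching (perfect matchings are subsets
   of E, so it suffices to range over the subsets of E). *)
Definition forcing_set (E M F : {fset edge}) : bool :=
  (F `<=` M) &&
  all (fun M' => is_pm E M' ==> (F `<=` M') ==> (M' == M))
      (enum_fset (fpowerset E)).

Definition complete_forcing (E S : {fset edge}) : bool :=
  (S `<=` E) &&
  all (fun M => is_pm E M ==> forcing_set E M (S `&` M))
      (enum_fset (fpowerset E)).

(* complete forcing number: the minimum size of a complete forcing set.
   (E itself is always a complete forcing set, so the default value #|E|
   of the minimum is never the only candidate.) *)
Definition cf (E : {fset edge}) : nat :=
  \big[minn/#|` E|]_(S <- enum_fset (fpowerset E) | complete_forcing E S) #|` S|.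

Definition fixed_double (E : {fset edge}) (e : edge) : Prop :=
  e \in E /\ forall M, is_pm E M -> e \in M.
Definition fixed_single (E : {fset edge}) (e : edge) : Prop :=
  e \in E /\ forall M, is_pm E M -> e \notin M.
Definition non_fixed (E : {fset edge}) (e : edge) : Prop :=
  e \in E /\ ~ fixed_double E e /\ ~ fixed_single E e.

Definition share_vertex (e f : edge) : bool := has (fun v => v \in ends f) (ends e).

Definition is_normal_component (E C : {fset edge}) : Prop :=
  [/\ C != fset0,
      (forall e, e \in C -> non_fixed E e),
      (forall e f, e \in C -> f \in C ->
         exists p : seq edge, [/\ path share_vertex e p, all (mem C) p & last e p = f])
    & (forall e f, e \in C -> non_fixed E f -> share_vertex e f -> f \in C)].

(* Main.v *)
Require Import Defs.
From mathcomp Require Import all_boot all_order all_algebra.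
From mathcomp Require Import finmap.
From Stdlib Require Import Classical.
Set Implicit Arguments. Unset Strict Implicit. Unset Printing Implicit Defensive.
Local Open Scope fset_scope.

Lemma is_pmP (E M : {fset edge}) : is_pm E M <->
  M `<=` E /\ forall e v, e \in E -> v \in ends e -> #|` [fset f in M | v \in ends f]| = 1%N.
Proof.
rewrite /is_pm; split.
  move=> /andP[sub /allP H]; split=> // e v eE vE.
  by have /allP /(_ v vE) /eqP := H e eE.
move=> [sub H]; apply/andP; split=> //; apply/allP=> e eE; apply/allP=> v vE.
by rewrite (H e v eE vE).
Qed.

Lemma pm_sub (E M : {fset edge}) : is_pm E M -> M `<=` E.
Proof. by case/is_pmP. Qed.

Lemma pm_uniq (E M : {fset edge}) e v f g : is_pm E M -> e \in E -> v \in ends e ->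
  f \in M -> g \in M -> v \in ends f -> v \in ends g -> f = g.
Proof.
move=> /is_pmP[_ H] eE vE fM gM vf vg.
have /eqP/cardfs1P[x Hx] := H e v eE vE.
have : f \in [fset f in M | v \in ends f] by rewrite !inE fM vf.
have : g \in [fset f in M | v \in ends f] by rewrite !inE gM vg.
by rewrite Hx !inE => /eqP -> /eqP ->.
Qed.

Lemma pm_ex (E M : {fset edge}) e v : is_pm E M -> e \in E -> v \in ends e ->
  exists2 f, f \in M & v \in ends f.
Proof.
move=> /is_pmP[_ H] eE vE.
have /eqP/cardfs1P[x Hx] := H e v eE vE.
have : x \in [fset f in M | v \in ends f] by rewrite Hx inE.
by rewrite !inE => /andP[]; exists x.
Qed.

Lemma ends_head (e : edge) : e.1 \in ends e.
Proof. by case: e => [[x y] []]; rewrite /ends inE eqxx. Qed.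

Lemma pm_sub_eq (E M M' : {fset edge}) : is_pm E M -> is_pm E M' -> M `<=` M' -> M' = M.
Proof.
move=> pM pM' sub; apply/fsetP=> e; apply/idP/idP; last by move/(fsubsetP sub).
move=> eM'; have eE : e \in E by apply: (fsubsetP (pm_sub pM') e eM').
have [f fM vf] := pm_ex pM eE (ends_head e).
have fM' : f \in M' by apply: (fsubsetP sub).
by rewrite (pm_uniq pM' eE (ends_head e) eM' fM' (ends_head e) vf).
Qed.

Lemma forcing_setP (E M F : {fset edge}) : forcing_set E M F <->
  F `<=` M /\ forall M', is_pm E M' -> F `<=` M' -> M' = M.
Proof.
rewrite /forcing_set; split.
  move=> /andP[sub /allP H]; split=> // M' pM' FM'.
  have : M' \in enum_fset (fpowerset E) by rewrite fpowersetE (pm_sub pM').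
  by move/H; rewrite pM' FM' /= => /eqP.
move=> [sub H]; apply/andP; split=> //; apply/allP=> M' _.
by apply/implyP=> pM'; apply/implyP=> FM'; rewrite (H M' pM' FM').
Qed.

Lemma complete_forcingP (E S : {fset edge}) : complete_forcing E S <->
  S `<=` E /\ forall M, is_pm E M -> forcing_set E M (S `&` M).
Proof.
rewrite /complete_forcing; split.
  move=> /andP[sub /allP H]; split=> // M pM.
  have : M \in enum_fset (fpowerset E) by rewrite fpowersetE (pm_sub pM).
  by move/H; rewrite pM.
move=> [sub H]; apply/andP; split=> //; apply/allP=> M _.
by apply/implyP=> pM; apply: H.
Qed.

Lemma cf_self (E : {fset edge}) : complete_forcing E E.
Proof.
apply/complete_forcingP; split=> // M pM; apply/forcing_setP.
have -> : E `&` M = M by apply/fsetIidPr; apply: pm_sub pM.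
split=> [|M' pM' sub]; [exact: fsubset_refl | exact: (pm_sub_eq pM pM' sub)].
Qed.

Lemma bigmin_le (s : seq {fset edge}) (P : pred {fset edge}) (F : {fset edge} -> nat) idx i :
  i \in s -> P i -> \big[minn/idx]_(j <- s | P j) F j <= F i.
Proof.
elim: s => // x s IH; rewrite inE big_cons => /orP[/eqP <-|iS] Pi.
  by rewrite Pi geq_minl.
case: (P x); last exact: IH.
by rewrite (leq_trans (geq_minr _ _)) // IH.
Qed.

Lemma bigmin_attain (s : seq {fset edge}) (P : pred {fset edge}) (F : {fset edge} -> nat) idx :
  \big[minn/idx]_(j <- s | P j) F j = idx \/
  exists2 i, i \in s /\ P i & \big[minn/idx]_(j <- s | P j) F j = F i.
Proof.
elim: s => [|x s IH]; first by rewrite big_nil; left.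
rewrite big_cons; case Px: (P x); last first.
  case: IH => [->|[i [iS Pi] ->]]; [by left| by right; exists i; rewrite // inE iS orbT].
rewrite /minn; case: ifP => _.
  by right; exists x; rewrite // inE eqxx.
case: IH => [->|[i [iS Pi] ->]]; [by left| by right; exists i; rewrite // inE iS orbT].
Qed.

Lemma cf_le (E S : {fset edge}) : complete_forcing E S -> cf E <= #|` S|.
Proof.
move=> H; rewrite /cf; apply: bigmin_le => //.
by rewrite fpowersetE; case/complete_forcingP: H.
Qed.

Lemma cf_attain (E : {fset edge}) : exists S, complete_forcing E S /\ #|` S| = cf E.
Proof.
case: (bigmin_attain (enum_fset (fpowerset E)) (complete_forcing E) (fun S => #|` S|) #|` E|).
  by rewrite /cf => ->; exists E; split=> //; apply: cf_self.
by move=> [S [_ PS] H]; exists S; rewrite /cf H.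
Qed.

Lemma nf_E (E : {fset edge}) e : non_fixed E e -> e \in E.
Proof. by case. Qed.

Lemma nf_pm (E : {fset edge}) e : non_fixed E e -> exists M, is_pm E M /\ e \in M.
Proof.
move=> [eE [_ ns]]; apply: NNPP => H; apply: ns; split=> // M pM.
apply/negP=> eM; apply: H; by exists M.
Qed.

Lemma comp_sub (E C : {fset edge}) : is_normal_component E C -> C `<=` E.
Proof. by case=> _ H _ _; apply/fsubsetP=> e /H /nf_E. Qed.

Lemma comp_in (E C M : {fset edge}) g v h : is_pm E M -> is_normal_component E C ->
  g \in C -> v \in ends g -> h \in M -> v \in ends h -> h \in C.
Proof.
move=> pM HC gC vg hM vh; case: (HC) => _ Hnf _ Hcl.
have gnf := Hnf g gC; have gE := nf_E gnf.
apply: (Hcl g h gC); last by apply/hasP; exists v.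
have hE : h \in E by apply: (fsubsetP (pm_sub pM)).
split=> //; split; last by case=> _ /(_ M pM); rewrite hM.
case=> _ Hd; have [M2 [pM2 gM2]] := nf_pm gnf.
have hM2 := Hd M2 pM2.
have egh := pm_uniq pM2 gE vg gM2 hM2 vg vh.
case: gnf => _ [nd _]; apply: nd; split=> //; by rewrite egh.
Qed.

Lemma pm_restrict (E C M : {fset edge}) : is_pm E M -> is_normal_component E C ->
  is_pm C (M `&` C).
Proof.
move=> pM HC; apply/is_pmP; split; first exact: fsubsetIr.
move=> e v eC ve.
have eE : e \in E by apply: (fsubsetP (comp_sub HC)).
have -> : [fset f in M `&` C | v \in ends f] = [fset f in M | v \in ends f].
  apply/fsetP=> x; rewrite !inE; case xM: (x \in M) => //=.
  case vx: (v \in ends x); rewrite ?andbF ?andbT //.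
  exact: (comp_in pM HC eC ve xM vx).
by case/is_pmP: pM => _ /(_ e v eE ve).
Qed.

Lemma pm_swap (E C M N : {fset edge}) : is_pm E M -> is_normal_component E C ->
  is_pm C N -> is_pm E ((M `\` C) `|` N).
Proof.
move=> pM HC pN; have CE := comp_sub HC.
apply/is_pmP; split.
  rewrite fsubUset; apply/andP; split.
    exact: (fsubset_trans (fsubsetDl _ _) (pm_sub pM)).
  exact: (fsubset_trans (pm_sub pN) CE).
move=> e v eE ve.
case: (boolP (has (fun g => v \in ends g) C)) => [/hasP [g gC vg]|hC].
  have -> : [fset f in (M `\` C) `|` N | v \in ends f] = [fset f in N | v \in ends f].
    apply/fsetP=> x; rewrite !inE; case vx: (v \in ends x); rewrite ?andbF ?andbT //.
    case xN: (x \in N); rewrite ?orbT ?orbF //.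
    case xM: (x \in M); rewrite ?andbF ?andbT //.
    by rewrite (comp_in pM HC gC vg xM vx).
  by case/is_pmP: pN => _ /(_ g v gC vg).
have -> : [fset f in (M `\` C) `|` N | v \in ends f] = [fset f in M | v \in ends f].
  apply/fsetP=> x; rewrite !inE; case vx: (v \in ends x); rewrite ?andbF ?andbT //.
  have xC : x \notin C by apply: contra hC => xC; apply/hasP; exists x.
  have xN : x \notin N by apply: contra xC; apply: (fsubsetP (pm_sub pN)).
  by rewrite (negbTE xN) xC orbF.
by case/is_pmP: pM => _ /(_ e v eE ve).
Qed.

Lemma swap_cap (C M N : {fset edge}) : N `<=` C -> ((M `\` C) `|` N) `&` C = N.
Proof.
move=> NC; apply/fsetP=> x; rewrite !inE.
case xN: (x \in N); first by rewrite orbT (fsubsetP NC x xN).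
by case: (x \in C); rewrite ?andbF.
Qed.

Lemma restrict_cf (E C S0 : {fset edge}) : complete_forcing E S0 -> is_normal_component E C ->
  has_pm E -> complete_forcing C (S0 `&` C).
Proof.
move=> /complete_forcingP [S0E HS] HC [M0 pM0].
apply/complete_forcingP; split; first exact: fsubsetIr.
move=> N pN; apply/forcing_setP; split; first exact: fsubsetIr.
move=> N' pN' sub.
have NC := pm_sub pN; have N'C := pm_sub pN'.
have pM := pm_swap pM0 HC pN; have pM' := pm_swap pM0 HC pN'.
have /forcing_setP [_ Hf] := HS _ pM.
have eq : (M0 `\` C) `|` N' = (M0 `\` C) `|` N.
  apply: Hf => //; apply/fsubsetP=> x; rewrite inE => /andP[xS].
  rewrite !in_fsetU; case xN: (x \in N); rewrite ?orbF ?orbT.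
    move=> _; apply/orP; right; apply: (fsubsetP sub); rewrite !inE xS xN andbT /=.
    exact: (fsubsetP NC).
  by move=> ->.
by rewrite -(swap_cap M0 NC) -(swap_cap M0 N'C) eq.
Qed.

Lemma union_forcing (E T : {fset edge}) : T `<=` E ->
  (forall e, non_fixed E e -> exists C, [/\ is_normal_component E C, e \in C &
      exists SC, complete_forcing C SC /\ SC `<=` T]) ->
  complete_forcing E T.
Proof.
move=> TE Hcov; apply/complete_forcingP; split=> // M pM.
apply/forcing_setP; split; first exact: fsubsetIr.
move=> M' pM' sub; apply/fsetP=> e.
case eE: (e \in E); last first.
  have h1 : e \notin M by apply: contra (negbT eE); apply: (fsubsetP (pm_sub pM)).
  have h2 : e \notin M' by apply: contra (negbT eE); apply: (fsubsetP (pm_sub pM')).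
  by rewrite (negbTE h1) (negbTE h2).
case: (classic (non_fixed E e)) => [nf|nnf].
  have [C [HC eC [SC [cSC SCT]]]] := Hcov e nf.
  have pN := pm_restrict pM HC; have pN' := pm_restrict pM' HC.
  have /complete_forcingP [_ HSC] := cSC.
  have /forcing_setP [_ Hf] := HSC _ pN.
  have eq : M' `&` C = M `&` C.
    apply: Hf => //; apply/fsubsetP=> x; rewrite !inE => /andP[xS /andP[xM xC]].
    rewrite xC andbT; apply: (fsubsetP sub); rewrite !inE xM andbT.
    exact: (fsubsetP SCT).
  have := congr1 (fun X => e \in X) eq; rewrite /= !inE eC !andbT => ->.
  done.
have [fd|fs] : fixed_double E e \/ fixed_single E e.
  apply: NNPP => H; apply: nnf; split; first by [].
  by split=> h; apply: H; [left|right].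
  by rewrite (proj2 fd _ pM) (proj2 fd _ pM').
by rewrite (negbTE (proj2 fs _ pM)) (negbTE (proj2 fs _ pM')).
Qed.

From Stdlib Require Import ClassicalEpsilon.

Definition pb (P : Prop) : bool := if excluded_middle_informative P then true else false.
Lemma pbP P : reflect P (pb P).
Proof. rewrite /pb; case: excluded_middle_informative => h; by constructor. Qed.

Lemma sv_sym : symmetric share_vertex.
Proof.
move=> e f; rewrite /share_vertex; apply/hasP/hasP => [][v h1 h2]; by exists v.
Qed.

Lemma path_rev_ex (r : rel edge) x p : symmetric r -> path r x p ->
  exists q, [/\ path r (last x p) q, last (last x p) q = x & {subset q <= x :: p}].
Proof.
move=> sym; elim: p x => [|y p IH] x /=.
  by move=> _; exists [::]; split.
move=> /andP[rxy py]; have [q [pq lq sq]] := IH y py.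
exists (rcons q x); split.
- by rewrite rcons_path pq lq sym.
- by rewrite last_rcons.
- move=> z; rewrite mem_rcons !inE => /orP[->//|/sq]; rewrite inE => ->; by rewrite orbT.
Qed.

Lemma path_prefix (r : rel edge) x p y : path r x p -> y \in p ->
  exists q, [/\ path r x q, last x q = y & {subset q <= p}].
Proof.
move=> pp yp; case/splitPr: yp pp => p1 p2.
rewrite cat_path /= => /and3P[h1 h2 _].
exists (rcons p1 y); split.
- by rewrite rcons_path h1.
- by rewrite last_rcons.
- by move=> z; rewrite mem_rcons mem_cat !inE => /orP[->|->]; rewrite ?orbT.
Qed.

Definition reach (E : {fset edge}) e f := exists p,
  [/\ path share_vertex e p, (forall x, x \in p -> non_fixed E x) & last e p = f].

Definition compof (E : {fset edge}) e : {fset edge} :=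
  [fset f in E | pb (non_fixed E f /\ reach E e f)].

Lemma compofP E e f : f \in compof E e <-> non_fixed E f /\ reach E e f.
Proof.
rewrite /compof !inE; split; first by move=> /andP[_ /pbP].
move=> h; apply/andP; split; first exact: (nf_E h.1).
exact/pbP.
Qed.

Lemma reach_mid E e p y : path share_vertex e p -> (forall x, x \in p -> non_fixed E x) ->
  y \in p -> y \in compof E e.
Proof.
move=> pp nf yp; have [q [pq lq sq]] := path_prefix pp yp.
apply/compofP; split; first exact: nf.
by exists q; split=> // x /sq /nf.
Qed.

Lemma compof_comp E e : non_fixed E e -> is_normal_component E (compof E e).
Proof.
move=> nfe.
have ee : e \in compof E e by apply/compofP; split=> //; exists [::].
split.
- by apply/fset0Pn; exists e.
- by move=> f /compofP[].
- move=> f g /compofP[_ [p1 [pp1 nf1 l1]]] /compofP[_ [p2 [pp2 nf2 l2]]].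
  have [q [pq lq sq]] := path_rev_ex sv_sym pp1.
  rewrite l1 in pq lq.
  exists (q ++ p2); split.
  + by rewrite cat_path pq lq.
  + apply/allP=> x; rewrite mem_cat => /orP[/sq|xp2].
      by rewrite inE => /orP[/eqP ->//|xp1]; apply: (reach_mid pp1 nf1).
    exact: (reach_mid pp2 nf2).
  + by rewrite last_cat lq.
- move=> f g /compofP[nff [p [pp nfp lp]]] nfg sfg; apply/compofP; split=> //.
  exists (rcons p g); split.
  + by rewrite rcons_path pp lp.
  + by move=> x; rewrite mem_rcons inE => /orP[/eqP ->//|/nfp].
  + by rewrite last_rcons.
Qed.

Lemma comp_path_in E C' x p : is_normal_component E C' -> x \in C' ->
  path share_vertex x p -> (forall y, y \in p -> non_fixed E y) -> all (mem C') p.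
Proof.
move=> HC; elim: p x => //= y p IH x xC /andP[sxy py] nf.
case: HC => _ _ _ Hcl.
have yC : y \in C' by apply: (Hcl x y xC) => //; apply: nf; rewrite inE eqxx.
rewrite /= yC /=; apply: (IH y yC py) => z zp; apply: nf; by rewrite inE zp orbT.
Qed.

Lemma comp_eq E C C' e : is_normal_component E C -> is_normal_component E C' ->
  e \in C -> e \in C' -> C = C'.
Proof.
have incl : forall C C', is_normal_component E C -> is_normal_component E C' ->
  e \in C -> e \in C' -> C `<=` C'.
  move=> D D' HD HD' eD eD'; apply/fsubsetP=> f fD.
  case: (HD) => _ nfD conn _.
  have [p [pp ap lp]] := conn e f eD fD.
  have nfp : forall y, y \in p -> non_fixed E y by move=> y /(allP ap) /nfD.
  have := comp_path_in HD' eD' pp nfp => /allP H.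
  have := mem_last e p; rewrite lp inE => /orP[/eqP ->//|]; exact: H.
move=> HC HC' eC eC'; apply/eqP; rewrite eqEfsubset.
by rewrite (incl C C') // (incl C' C).
Qed.

Lemma sum_le (L : seq {fset edge}) (f g : {fset edge} -> nat) :
  (forall C, C \in L -> f C <= g C) -> \sum_(C <- L) f C <= \sum_(C <- L) g C.
Proof.
elim: L => [|C L IH] H; first by rewrite !big_nil.
rewrite !big_cons leq_add //; first by apply: H; rewrite inE eqxx.
by apply: IH => D DL; apply: H; rewrite inE DL orbT.
Qed.

Lemma sum_disj (L : seq {fset edge}) (X : {fset edge}) : uniq L ->
  (forall C C', C \in L -> C' \in L -> C <> C' -> C `&` C' = fset0) ->
  \sum_(C <- L) #|` X `&` C| <= #|` X|.
Proof.
elim: L X => [|C L IH] X; first by rewrite big_nil.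
move=> /= /andP[CL uL] Hd; rewrite big_cons.
have -> : \sum_(C' <- L) #|` X `&` C'| = \sum_(C' <- L) #|` (X `\` C) `&` C'|.
  apply: eq_big_seq => D DL; congr (#|` _|); apply/fsetP=> x; rewrite !inE.
  case xD: (x \in D); rewrite ?andbF ?andbT //.
  have CD : C `&` D = fset0.
    apply: Hd; rewrite ?inE ?eqxx ?DL ?orbT //.
    by move=> eCD; move: CL; rewrite eCD DL.
  case xC: (x \in C); last by [].
  have : x \in C `&` D by rewrite inE xC xD.
  by rewrite CD inE.
rewrite -[X in _ <= X](cardfsID C X) leq_add2l.
apply: IH => // D D' DL D'L; apply: Hd; by rewrite inE ?DL ?D'L orbT.
Qed.

Lemma build (E : {fset edge}) (L : seq {fset edge}) :
  (forall C, C \in L -> is_normal_component E C) ->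
  exists T, [/\ T `<=` E, #|` T| <= \sum_(C <- L) cf C &
     forall C, C \in L -> exists SC, complete_forcing C SC /\ SC `<=` T].
Proof.
elim: L => [|C L IH] H.
  by exists fset0; split=> //; rewrite fsub0set.
have HC : is_normal_component E C by apply: H; rewrite inE eqxx.
have [T [TE Tc TS]] := IH (fun D DL => H D (mem_behead (s:=C :: L) DL)).
have [SC [cSC eSC]] := cf_attain C.
have SCE : SC `<=` E.
  by apply: fsubset_trans (comp_sub HC); case/complete_forcingP: cSC.
exists (SC `|` T); split.
- by rewrite fsubUset SCE TE.
- rewrite big_cons -eSC; apply: leq_trans (leq_card_fsetU SC T) _.
  by rewrite leq_add2l.
- move=> D; rewrite inE => /orP[/eqP ->|DL].
    by exists SC; split=> //; apply: fsubsetUl.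
  have [SD [cSD SDT]] := TS D DL; exists SD; split=> //.
  exact: (fsubset_trans SDT (fsubsetUr _ _)).
Qed.

Theorem mainTheorem1 (S : {fset cell}) (Hs : seq {fset edge}) :
  is_HS S -> has_pm (HS_edges S) ->
  uniq Hs ->
  (forall C, C \in Hs <-> is_normal_component (HS_edges S) C) ->
  cf (HS_edges S) = \sum_(C <- Hs) cf C.
Proof.
move=> _ hpm uH HHs; set E := HS_edges S.
have compL : forall C, C \in Hs -> is_normal_component E C by move=> C /HHs.
apply/eqP; rewrite eqn_leq; apply/andP; split.
  have [T [TE Tc TS]] := build compL.
  apply: leq_trans Tc; apply: cf_le; apply: union_forcing => // e nfe.
  have Hc := compof_comp nfe.
  have cH : compof E e \in Hs by apply/HHs.
  exists (compof E e); split=> //.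
    by apply/compofP; split=> //; exists [::].
  exact: TS.
have [S0 [cS0 eS0]] := cf_attain E.
rewrite -eS0.
apply: leq_trans (sum_disj S0 uH _).
  apply: sum_le => C CH; apply: cf_le; exact: (restrict_cf cS0 (compL C CH) hpm).
move=> C C' CH C'H nCC'; apply/eqP; apply: contraT => /fset0Pn [x].
rewrite inE => /andP[xC xC']; case: nCC'.
exact: (comp_eq (compL C CH) (compL C' C'H) xC xC').
Qed.
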